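(* \begin{align*}\kappa_2(\Lambda_1,\Lambda_2)&\le\max\{\mu_c(\Lambda_1,P_M\Phi_1;P_M\Phi_1)+\mu_c(\Lambda_2,P_M\Phi_2;P_M\Phi_1),\ \mu_c(\Lambda_2,P_M\Phi_2;P_M\Phi_2)+\mu_c(\Lambda_1,P_M\Phi_1;P_M\Phi_2)\}\\&=\max\{\mu_c(\Lambda_1,P_M\Phi_1;\Phi_1)+\mu_c(\Lambda_2,P_M\Phi_2;\Phi_1),\ \mu_c(\Lambda_2,P_M\Phi_2;\Phi_2)+\mu_c(\Lambda_1,P_M\Phi_1;\Phi_2)\}.\end{align*}
   Context: Let $\mathcal H$ be a separable Hilbert space with an orthogonal decomposition $\mathcal H=\mathcal H_K\oplus\mathcal H_M$, and let $P_K,P_M$ be the orthogonal projections onto $\mathcal H_K,\mathcal H_M$. Let $\Phi_1=(\phi_{1i})_{i\in I}$ and $\Phi_2=(\phi_{2j})_{j\in J}$ be Parseval frames for $\mathcal H$ with analysis operators $\Phi_1^*f=(\langle f,\phi_{1i}\rangle)_{i\in I}$, $\Phi_2^*f=(\langle f,\phi_{2j}\rangle)_{j\in J}$. $\mathbf 1_\Lambda$ restricts a coefficient sequence to $\Lambda$; $\|\cdot\|_1$ is the (possibly infinite) $\ell^1$ norm. Fix $\Lambda_1\subset I$, $\Lambda_2\subset J$. Joint concentration of the missing part: $\kappa_2(\Lambda_1,\Lambda_2)=\sup_{x,y\in\mathcal H,\ P_Kx=P_Ky}\frac{\|\mathbf 1_{\Lambda_1}\Phi_1^*(x-y)\|_1+\|\mathbf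 1_{\Lambda_2}\Phi_2^*(x-y)\|_1}{\|\Phi_1^*x\|_1+\|\Phi_2^*y\|_1}$. Cluster coherence with projections: for $a,b\in\{1,2\}$ with index sets $I_1=I$, $I_2=J$, and $\Lambda\subset I_a$, $\mu_c(\Lambda,P_M\Phi_a;P_M\Phi_b)=\max_{j\in I_b}\sum_{i\in\Lambda}|\langle P_M\phi_{ai},P_M\phi_{bj}\rangle|$ and $\mu_c(\Lambda,P_M\Phi_a;\Phi_b)=\max_{j\in I_b}\sum_{i\in\Lambda}|\langle P_M\phi_{ai},\phi_{bj}\rangle|$ (suprema if not attained). *)

(* Defs.v *)
From HB Require Import structures.
From mathcomp Require Import all_boot all_order all_algebra.
From mathcomp Require Import complex.
From mathcomp Require Import boolp classical_sets functions reals constructive_ereal ereal esum.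

Set Implicit Arguments.
Unset Strict Implicit.
Unset Printing Implicit Defensive.

Import Order.TTheory GRing.Theory Num.Theory.
Local Open Scope ring_scope.
Local Open Scope classical_set_scope.

Definition cabs {R : rcfType} (z : R[i]) : R :=
  Num.sqrt (complex.Re z ^+ 2 + complex.Im z ^+ 2).

Definition ipnorm {R : rcfType} {V : Type} (ip : V -> V -> R[i]) (x : V) : R :=
  Num.sqrt (complex.Re (ip x x)).

Record HilbertSpace (R : realType) := {
  hs_car :> lmodType R[i] ;
  hs_ip : hs_car -> hs_car -> R[i] ;
  hs_ip_linear : forall (a : R[i]) (x y z : hs_car),
      hs_ip (a *: x + y) z = a * hs_ip x z + hs_ip y z ;
  hs_ip_conj : forall x y : hs_car, hs_ip y x = conjc (hs_ip x y) ;
  hs_ip_pos : forall x : hs_car, 0 <= hs_ip x x ;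
  hs_ip_def : forall x : hs_car, hs_ip x x = 0 -> x = 0 ;
  hs_complete : forall u : nat -> hs_car,
      (forall e : R, 0 < e -> exists N : nat, forall n m : nat,
          (N <= n)%N -> (N <= m)%N -> ipnorm hs_ip (u n - u m) < e) ->
      exists l : hs_car, forall e : R, 0 < e -> exists N : nat, forall n : nat,
          (N <= n)%N -> ipnorm hs_ip (u n - l) < e ;
  hs_separable : exists d : nat -> hs_car, forall (x : hs_car) (e : R),
      0 < e -> exists n : nat, ipnorm hs_ip (x - d n) < e
}.

Section Defs.
Variable R : realType.
Variable H : HilbertSpace R.

Local Notation V := (@hs_car _ H).
Local Notation ip := (@hs_ip _ H).
Local Notation nrm := (ipnorm (@hs_ip _ H)).

Definition is_subspace (S : set V) : Prop :=
  S 0 /\ forall (a : R[i]) (x y : V), S x -> S y -> S (a *: x + y).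

Definition orth_decomp (HK HM : set V) : Prop :=
  [/\ is_subspace HK, is_subspace HM,
      (forall k m : V, HK k -> HM m -> ip k m = 0) &
      (forall x : V, exists k m : V, [/\ HK k, HM m & x = k + m])].

Definition orth_proj (S : set V) (P : V -> V) : Prop :=
  forall x : V, S (P x) /\ (forall s : V, S s -> ip (x - P x) s = 0).

Definition parseval_frame (I : choiceType) (phi : I -> V) : Prop :=
  forall f : V,
    (\esum_(i in [set: I]) ((cabs (ip f (phi i))) ^+ 2)%:E)%E = ((nrm f) ^+ 2)%:E.

Definition analysis_op (I : choiceType) (phi : I -> V) (f : V) : I -> R[i] :=
  fun i => ip f (phi i).

Definition l1_restr (I : choiceType) (L : set I) (c : I -> R[i]) : \bar R :=
  (\esum_(i in L) (cabs (c i))%:E)%E.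

Definition l1 (I : choiceType) (c : I -> R[i]) : \bar R := l1_restr [set: I] c.

(* joint concentration of the missing part kappa_2(Lambda1, Lambda2);
   the supremum ranges over the pairs (x, y) for which the quotient is
   defined, i.e. with a finite, nonzero denominator. *)
Definition kappa2 (PK : V -> V) (I J : choiceType) (phi1 : I -> V) (phi2 : J -> V)
    (L1 : set I) (L2 : set J) : \bar R :=
  ereal_sup [set r | exists x y : V,
    let num := (l1_restr L1 (analysis_op phi1 (x - y))
               + l1_restr L2 (analysis_op phi2 (x - y)))%E in
    let den := (l1 (analysis_op phi1 x) + l1 (analysis_op phi2 y))%E in
    [/\ PK x = PK y, (0 < den)%E, (den < +oo)%E & r = (num / den)%E]].

Definition mu_c (I J : choiceType) (L : set I) (g : I -> V) (h : J -> V) : \bar R :=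
  ereal_sup [set (\esum_(i in L) (cabs (ip (g i) (h j)))%:E)%E | j in [set: J]].

End Defs.

(* Main.v *)
Require Import Defs.
From HB Require Import structures.
From mathcomp Require Import all_boot all_order all_algebra.
From mathcomp Require Import complex.
From mathcomp Require Import boolp classical_sets functions reals constructive_ereal ereal esum fsbigop.
From mathcomp Require Import ring lra.
Import Order.TTheory GRing.Theory Num.Theory.
Local Open Scope ring_scope.
Local Open Scope classical_set_scope.

Section Cx.
Variable R : rcfType.

Lemma cabs_normc (z : R[i]) : cabs z = Normc.normc z.
Proof. by case: z. Qed.

Lemma cabs_ge0 (z : R[i]) : 0 <= cabs z.
Proof. exact: sqrtr_ge0. Qed.

Lemma cabsM (x y : R[i]) : cabs (x * y) = cabs x * cabs y.
Proof. by rewrite !cabs_normc Normc.normcM. Qed.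

Lemma cabs0 : cabs (0 : R[i]) = 0.
Proof. by rewrite cabs_normc Normc.normc0. Qed.

Lemma cabsD (x y : R[i]) : cabs (x + y) <= cabs x + cabs y.
Proof. by rewrite !cabs_normc; apply: le_normcD. Qed.

Lemma cabsN (x : R[i]) : cabs (- x) = cabs x.
Proof. by rewrite !cabs_normc; apply: normcN. Qed.

Lemma cabs2 (z : R[i]) : cabs z ^+ 2 = complex.Re z ^+ 2 + complex.Im z ^+ 2.
Proof. by rewrite /cabs sqr_sqrtr // addr_ge0 // sqr_ge0. Qed.

Lemma cabs_ptw (a u : R[i]) :
  cabs (u + a) ^+ 2 <= cabs (- u + a) ^+ 2 + 4 * (cabs a * cabs u).
Proof.
rewrite !cabs2 -sqrtrM ?addr_ge0 ?sqr_ge0 //.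
case: a => a1 a2; case: u => u1 u2 /=.
have cs : a1 * u1 + a2 * u2 <= Num.sqrt ((a1 ^+ 2 + a2 ^+ 2) * (u1 ^+ 2 + u2 ^+ 2)).
  apply: (le_trans (ler_norm _)); rewrite -sqrtr_sqr ler_sqrt; last first.
    by rewrite mulr_ge0 // addr_ge0 // sqr_ge0.
  have : 0 <= (a1 * u2 - a2 * u1) ^+ 2 by rewrite sqr_ge0.
  move=> h; nra.
nra.
Qed.

Lemma cabs_ReIm (z : R[i]) : complex.Re (z * conjc z) = cabs z ^+ 2.
Proof. by rewrite cabs2; case: z => a b /=; ring. Qed.

Lemma ReD (a b : R[i]) : complex.Re (a + b) = complex.Re a + complex.Re b.
Proof. by case: a; case: b. Qed.

End Cx.

Section Hilb.
Variable R : realType.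
Variable H : HilbertSpace R.
Local Notation ip := (@hs_ip _ H).

Lemma ip0l (z : H) : ip 0 z = 0.
Proof.
have := hs_ip_linear 1 0 0 z; rewrite scale1r addr0 mul1r => h.
by apply: (addrI (ip 0 z)); rewrite -h addr0.
Qed.

Lemma ipDl (x y z : H) : ip (x + y) z = ip x z + ip y z.
Proof. by have := hs_ip_linear 1 x y z; rewrite scale1r mul1r. Qed.

Lemma ipZl a (x z : H) : ip (a *: x) z = a * ip x z.
Proof. by have := hs_ip_linear a x 0 z; rewrite addr0 ip0l addr0. Qed.

Lemma ipNl (x z : H) : ip (- x) z = - ip x z.
Proof. by rewrite -scaleN1r ipZl mulN1r. Qed.

Lemma ipBl (x y z : H) : ip (x - y) z = ip x z - ip y z.
Proof. by rewrite ipDl ipNl. Qed.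

Lemma ipDr (x y z : H) : ip x (y + z) = ip x y + ip x z.
Proof.
by rewrite (hs_ip_conj (y + z) x) ipDl rmorphD /= -!hs_ip_conj.
Qed.

Lemma ipZr a (x y : H) : ip x (a *: y) = conjc a * ip x y.
Proof. by rewrite (hs_ip_conj (a *: y) x) ipZl rmorphM /= -hs_ip_conj. Qed.

Lemma ip0r (x : H) : ip x 0 = 0.
Proof. by rewrite hs_ip_conj ip0l rmorph0. Qed.

Lemma ip_self_Im (x : H) : complex.Im (ip x x) = 0.
Proof. by have := hs_ip_pos x; rewrite lecE => /andP[/eqP h _]; rewrite h. Qed.

Lemma ip_self_Re (x : H) : 0 <= complex.Re (ip x x).
Proof. by have := hs_ip_pos x; rewrite lecE => /andP[_]. Qed.

Lemma nrm2 (x : H) : ipnorm ip x ^+ 2 = complex.Re (ip x x).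
Proof. by rewrite /ipnorm sqr_sqrtr // ip_self_Re. Qed.

Lemma ip_expand t (w x : H) :
  ip (t *: w + x) (t *: w + x) =
  t * conjc t * ip w w + t * conjc (ip x w) + conjc t * ip x w + ip x x.
Proof.
rewrite hs_ip_linear !ipDr !ipZr (hs_ip_conj x w).
by rewrite mulrDr mulrA !addrA.
Qed.

Lemma ip_pm (c : R[i]) (w x : H) : ip x w = c ->
  ip (c *: w + x) (c *: w + x) = ip ((- c) *: w + x) ((- c) *: w + x) + 4%:R * (c * conjc c).
Proof. move=> hc; rewrite !ip_expand rmorphN /= hc. ring. Qed.

Lemma ip_eq0 (x : H) : complex.Re (ip x x) = 0 -> x = 0.
Proof.
move=> h; apply: hs_ip_def.
by move: h (ip_self_Im x); case: (ip x x) => a b /= -> ->.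
Qed.

End Hilb.

Section ES.
Variable R : realType.

Lemma esum_mulr_le (T : choiceType) (S : set T) (f : T -> \bar R) (m : \bar R) :
  (0 <= m)%E -> (forall i, 0 <= f i)%E ->
  (\esum_(i in S) (f i * m) <= (\esum_(i in S) f i) * m)%E.
Proof.
move=> m0 f0; apply: ge_ereal_sup => _ [X [finX XS] <-].
rewrite fsbig_finite // -ge0_sume_distrl; last by move=> i _; exact: f0.
apply: lee_wpmul2r => //; apply: ereal_sup_ubound; exists X => //.
by rewrite fsbig_finite.
Qed.

Lemma esum_swap (T1 T2 : choiceType) (S1 : set T1) (S2 : set T2)
    (f : T1 -> T2 -> \bar R) : (forall i j, 0 <= f i j)%E ->
  \esum_(i in S1) \esum_(j in S2) f i j = \esum_(j in S2) \esum_(i in S1) f i j.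
Proof.
move=> f0.
rewrite (esum_esum (I := S1) (J := fun _ => S2) (a := f) (fun i j _ _ => f0 i j)).
rewrite (esum_esum (I := S2) (J := fun _ => S1) (a := fun j i => f i j) (fun j i _ _ => f0 i j)).
have -> : S2 `*`` (fun _ => S1) = (fun p : T1 * T2 => (p.2, p.1)) @` (S1 `*`` (fun _ => S2)).
  apply/seteqP; split.
    by move=> [j i] [/= h1 h2]; exists (i, j).
  by move=> _ [[i j] [/= h1 h2] <-].
rewrite esum_image //.
by move=> [a b] [c d] _ _ /= [-> ->].
Qed.

End ES.

Section CS.
Variable R : realType.
Variable H : HilbertSpace R.
Local Notation ip := (@hs_ip _ H).

Lemma pars_Re (K : choiceType) (psi : K -> H) : parseval_frame psi -> forall f : H,
  (\esum_(i in [set: K]) (cabs (ip f (psi i)) ^+ 2)%:E)%E = (complex.Re (ip f f))%:E.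
Proof. by move=> P f; rewrite P nrm2. Qed.

Lemma cs_frame (K : choiceType) (psi : K -> H) : parseval_frame psi ->
  forall x w : H,
  ((cabs (ip x w))%:E <= \esum_(i in [set: K])
      (cabs (ip x (psi i)) * cabs (ip w (psi i)))%:E)%E.
Proof.
move=> P x w; set c := ip x w.
set S := (\esum_(i in _) _)%E.
have S0 : (0 <= S)%E by apply: esum_ge0 => i _; rewrite lee_fin mulr_ge0 // cabs_ge0.
have hp := pars_Re _ _ P (c *: w + x); have hm := pars_Re _ _ P ((- c) *: w + x).
have key : ((complex.Re (ip (c *: w + x) (c *: w + x)))%:E <=
    (complex.Re (ip ((- c) *: w + x) ((- c) *: w + x)))%:E + S * (4 * cabs c)%:E)%E.
  rewrite -hp -hm.
  apply: le_trans; last first.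
    apply: leeD; first exact: lexx.
    apply: (@esum_mulr_le R K [set: K] (fun i => (cabs (ip x (psi i)) * cabs (ip w (psi i)))%:E) _).
      by rewrite lee_fin mulr_ge0 // cabs_ge0.
    by move=> i; rewrite lee_fin mulr_ge0 // cabs_ge0.
  rewrite -esumD; last 2 first.
  - by move=> i _; rewrite lee_fin sqr_ge0.
  - by move=> i _; rewrite lee_fin !mulr_ge0 // cabs_ge0.
  apply: le_esum => i _; rewrite -EFinM -EFinD lee_fin !hs_ip_linear.
  have := cabs_ptw _ (ip x (psi i)) (c * ip w (psi i)).
  by rewrite cabsM mulNr; lra.
case: S S0 key => [s||] //= S0 key; last by rewrite leey.
rewrite lee_fin.
move: key; rewrite (@ip_pm R H c w x (erefl c)) ReD -!EFinM -EFinD lee_fin.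
have -> : complex.Re (4%:R * (c * conjc c)) = 4 * complex.Re (c * conjc c).
  by case: (c * conjc c) => a b /=; ring.
rewrite (cabs_ReIm _ c).
have := cabs_ge0 _ c; rewrite lee_fin in S0.
nra.
Qed.

End CS.

Section G.
Variable R : realType.
Variable H : HilbertSpace R.
Local Notation ip := (@hs_ip _ H).

Lemma frame_bound (K J' : choiceType) (psi : K -> H) (P : parseval_frame psi)
  (L : set J') (g : J' -> H) (x : H) (m : \bar R) :
  (0 <= m)%E -> (forall k, \esum_(j in L) (cabs (ip (g j) (psi k)))%:E <= m)%E ->
  (\esum_(j in L) (cabs (ip x (g j)))%:E <= l1 (analysis_op psi x) * m)%E.
Proof.
move=> m0 hm.
apply: (le_trans (le_esum (b := fun j => \esum_(k in setT)
   (cabs (ip x (psi k)) * cabs (ip (g j) (psi k)))%:E) _)).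
  by move=> j _; apply: (cs_frame _ _ _ _ P).
rewrite esum_swap; last by move=> j k; rewrite lee_fin mulr_ge0 // cabs_ge0.
rewrite /l1 /l1_restr /analysis_op.
apply: le_trans; last first.
  apply: (@esum_mulr_le R K [set: K] (fun k => (cabs (ip x (psi k)))%:E) m m0).
  by move=> k; rewrite lee_fin cabs_ge0.
apply: le_esum => k _.
have a0 : (0 <= (cabs (ip x (psi k)))%:E)%E by rewrite lee_fin cabs_ge0.
under eq_esum do rewrite EFinM muleC.
apply: le_trans.
  apply: (@esum_mulr_le R J' L (fun j => (cabs (ip (g j) (psi k)))%:E) _ a0).
  by move=> j; rewrite lee_fin cabs_ge0.
by rewrite [X in (_ <= X)%E]muleC; apply: lee_wpmul2r => //; exact: hm.
Qed.

End G.

Section P.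
Variable R : realType.
Variable H : HilbertSpace R.
Local Notation ip := (@hs_ip _ H).

Lemma proj_unique (S : set H) (P : H -> H) (s t x : H) :
  is_subspace S -> orth_proj S P -> S s ->
  (forall s', S s' -> ip t s' = 0) -> x = s + t -> P x = s.
Proof.
move=> [_ hS] hP Ss ht hx.
have Sd : S (s - P x).
  by have := hS (-1) (P x) s (proj1 (hP x)) Ss; rewrite scaleN1r addrC.
have h1 := proj2 (hP x) _ Sd.
have e : x - P x = (s - P x) + t by rewrite hx addrAC.
rewrite e ipDl (ht _ Sd) addr0 in h1.
have := @ip_eq0 R H (s - P x); rewrite h1 => /(_ (erefl _)) /eqP.
by rewrite subr_eq0 => /eqP.
Qed.

Lemma decomp (HK HM : set H) PK PM : orth_decomp HK HM -> orth_proj HK PK ->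
  orth_proj HM PM -> forall x, x = PK x + PM x.
Proof.
move=> [sK sM orth dec] hK hM x.
have [k [m [Hk Hm ->]]] := dec x.
rewrite (proj_unique _ _ k m _ sK hK Hk) //; last first.
  by move=> s' Ss'; rewrite hs_ip_conj orth // rmorph0.
rewrite (proj_unique _ _ m k _ sM hM Hm) //; last exact: addrC.
by move=> s' Ss'; rewrite orth.
Qed.

Lemma PM_PP (HM : set H) PM : orth_proj HM PM ->
  forall u v, ip (PM u) (PM v) = ip (PM u) v.
Proof.
move=> hM u v.
have -> : ip (PM u) v = ip (PM u) (PM v + (v - PM v)) by rewrite addrC subrK.
rewrite ipDr (hs_ip_conj (v - PM v)) (proj2 (hM v)) ?rmorph0 ?addr0 //.
exact: proj1 (hM u).
Qed.

Lemma PM_adj (HM : set H) PM : orth_proj HM PM ->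
  forall u v, ip (PM u) v = ip u (PM v).
Proof.
move=> hM u v; rewrite -(PM_PP _ _ hM).
have -> : ip u (PM v) = ip (PM u + (u - PM u)) (PM v) by rewrite addrC subrK.
by rewrite ipDl (proj2 (hM u)) ?addr0 //; exact: proj1 (hM v).
Qed.

Lemma triv_space (K : choiceType) (psi : K -> H) : parseval_frame psi ->
  (K -> False) -> forall f : H, f = 0.
Proof.
move=> P nK f; have := P f.
rewrite esum1; last by move=> i; case: (nK i).
rewrite nrm2 => /esym/eqP; rewrite eqe => /eqP h.
exact: ip_eq0.
Qed.

Lemma l1_zero (K : choiceType) (psi : K -> H) x :
  (forall f : H, f = 0) -> l1 (analysis_op psi x) = 0%E.
Proof.
move=> z; rewrite /l1 /l1_restr; apply: esum1 => i _.
by rewrite /analysis_op (z x) ip0l cabs0.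
Qed.

Lemma mu_ub (K J' : choiceType) (L : set J') (g : J' -> H) (h : K -> H) k :
  (\esum_(j in L) (cabs (ip (g j) (h k)))%:E <= mu_c L g h)%E.
Proof. by apply: ereal_sup_ubound; exists k. Qed.

Lemma mu_ge0 (K J' : choiceType) (L : set J') (g : J' -> H) (h : K -> H) (k : K) :
  (0 <= mu_c L g h)%E.
Proof.
apply: (le_trans _ (mu_ub _ _ L g h k)).
by apply: esum_ge0 => j _; rewrite lee_fin cabs_ge0.
Qed.

Lemma mu_eq (HM : set H) PM (K J' : choiceType) (L : set J') (g : J' -> H) (h : K -> H) :
  orth_proj HM PM -> mu_c L (PM \o g) (PM \o h) = mu_c L (PM \o g) h.
Proof.
move=> hM; rewrite /mu_c; congr ereal_sup; congr image; apply: funext => k.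
by apply: eq_esum => j _ /=; rewrite (PM_PP _ _ hM).
Qed.

End P.

Theorem mainTheorem3 (R : realType) (H : HilbertSpace R) (HK HM : set H)
    (PK PM : H -> H) (I J : choiceType) (phi1 : I -> H) (phi2 : J -> H)
    (L1 : set I) (L2 : set J) :
  orth_decomp HK HM -> orth_proj HK PK -> orth_proj HM PM ->
  parseval_frame phi1 -> parseval_frame phi2 ->
  let A := maxe (mu_c L1 (PM \o phi1) (PM \o phi1) + mu_c L2 (PM \o phi2) (PM \o phi1))%E
                (mu_c L2 (PM \o phi2) (PM \o phi2) + mu_c L1 (PM \o phi1) (PM \o phi2))%E in
  let B := maxe (mu_c L1 (PM \o phi1) phi1 + mu_c L2 (PM \o phi2) phi1)%E
                (mu_c L2 (PM \o phi2) phi2 + mu_c L1 (PM \o phi1) phi2)%E in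
  (kappa2 PK phi1 phi2 L1 L2 <= A)%E /\ A = B.
Proof.
move=> hdec hK hM P1 P2 A B.
have AB : A = B by rewrite /A /B !(mu_eq _ _ _ _ _ _ _ _ _ hM).
split; last exact: AB.
rewrite AB /B.
apply: ge_ereal_sup => r /= [x [y [hxy den0 denoo ->]]].
set X := l1 (analysis_op phi1 x) in den0 denoo *.
set Y := l1 (analysis_op phi2 y) in den0 denoo *.
have X0 : (0 <= X)%E by apply: esum_ge0 => i _; rewrite lee_fin cabs_ge0.
have Y0 : (0 <= Y)%E by apply: esum_ge0 => i _; rewrite lee_fin cabs_ge0.
have nontriv : forall (K : choiceType) (psi : K -> H), parseval_frame psi ->
    exists k : K, True.
  move=> K psi P; case: (pselect (exists k : K, True)) => // nK.
  have z := triv_space _ _ _ _ P (fun k => nK (ex_intro _ k Logic.I)).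
  by move: den0; rewrite /X /Y !(l1_zero _ _ _ _ _ z) adde0 ltxx.
have [i0 _] := nontriv _ _ P1.
have [j0 _] := nontriv _ _ P2.
have hz : forall v, cabs (@hs_ip _ H (x - y) v) <=
    cabs (@hs_ip _ H x (PM v)) + cabs (@hs_ip _ H y (PM v)).
  move=> v.
  have -> : x - y = PM x - PM y.
    rewrite {1}(decomp _ _ _ _ _ _ hdec hK hM x) {1}(decomp _ _ _ _ _ _ hdec hK hM y) hxy.
    by rewrite opprD addrACA subrr add0r.
  rewrite ipBl !(PM_adj _ _ _ _ hM).
  by apply: (le_trans (cabsD _ _ _)); rewrite cabsN.
have bnd : forall (K : choiceType) (psi : K -> H) (L : set K),
    (\esum_(j in L) (cabs (@hs_ip _ H (x - y) (psi j)))%:E <=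
     X * mu_c L (PM \o psi) phi1 + Y * mu_c L (PM \o psi) phi2)%E.
  move=> K psi L.
  apply: le_trans.
    apply: (le_esum (b := fun j => (cabs (@hs_ip _ H x (PM (psi j))))%:E +
                                  (cabs (@hs_ip _ H y (PM (psi j))))%:E)%E).
    by move=> j _; rewrite -EFinD lee_fin; exact: hz.
  rewrite esumD; last 2 first.
  - by move=> j _; rewrite lee_fin cabs_ge0.
  - by move=> j _; rewrite lee_fin cabs_ge0.
  apply: leeD.
    apply: (frame_bound _ _ _ _ _ P1 L (PM \o psi) x).
      exact: (mu_ge0 _ _ _ _ L _ phi1 i0).
    by move=> k; apply: (mu_ub _ _ _ _ L (PM \o psi) phi1 k).
  apply: (frame_bound _ _ _ _ _ P2 L (PM \o psi) y).
    exact: (mu_ge0 _ _ _ _ L _ phi2 j0).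
  by move=> k; apply: (mu_ub _ _ _ _ L (PM \o psi) phi2 k).
have b1 := bnd _ phi1 L1; have b2 := bnd _ phi2 L2.
have g11 := mu_ge0 _ _ _ _ L1 (PM \o phi1) phi1 i0.
have g12 := mu_ge0 _ _ _ _ L1 (PM \o phi1) phi2 j0.
have g21 := mu_ge0 _ _ _ _ L2 (PM \o phi2) phi1 i0.
have g22 := mu_ge0 _ _ _ _ L2 (PM \o phi2) phi2 j0.
have dfin : (X + Y)%E \is a fin_num by rewrite gt0_fin_numE.
have d0 : 0 < fine (X + Y)%E by rewrite -lte_fin fineK.
rewrite -(fineK dfin) inver (gt_eqF d0) lee_pdivrMr // fineK //.
apply: le_trans; first exact: leeD b1 b2.
rewrite ge0_muleDr // addeACA -!ge0_muleDr //.
rewrite (ge0_muleDr _ X0 Y0). apply: leeD; rewrite [Z in (_ <= Z)%E]muleC; apply: lee_wpmul2l => //.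
  by rewrite le_max lexx.
by rewrite le_max addeC lexx orbT.
Qed.
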